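(* Let $q\ge 2$ and $m\ge 1$. The number of different unordered partitions of ${\bf Z}_q^{(q^m-1)/(q-1)}$ into subcubes whose star matrices are fractal matrices with parameters $q$ and $m$ is exactly $\left(\frac{q^m-1}{q-1}\right)!$.
   Context: A subcube of ${\bf Z}_q^n$ is obtained by fixing some coordinates and letting the others run through ${\bf Z}_q$; its star pattern is the vector over ${\bf Z}_q\cup\{*\}$ with the fixed values in fixed coordinates and $*$ in free ones. The star matrix of a partition of ${\bf Z}_q^n$ into subcubes is the matrix whose rows are the star patterns of the subcubes. The matrices $M_{q,m}$ are defined recursively: $M_{q,0}$ has one row and zero columns; for $m\ge1$, $M_{q,m}$ consists of $q$ horizontal blocks indexed by $a=0,\dots,q-1$, each with $q^{m-1}$ rows; the first column has entry $a$ in every row of block $a$; the remaining columns are divided into $q$ vertical stripes of width equal to the number of columns of $M_{q,m-1}$, and in block $a$ the $a$-th stripe is a copy of $M_{q,m-1}$ while all other stripes of block $a$ consist only of $*$. A fractal matrix with parameters $q,m$ is any matrix obtained from $M_{q,m}$ by permuting rows and columns. ($M_{q,m}$ has $q^m$ rows and $\frac{q^m-1}{q-1}$ columns.) *)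

(* Defs.v *)
From mathcomp Require Import all_boot all_fingroup.
Set Implicit Arguments. Unset Strict Implicit. Unset Printing Implicit Defensive.

(* Points of Z_q^n are functions 'I_n -> 'I_q (coordinates taken in {0..q-1}).
   A star pattern is a function 'I_n -> option 'I_q, with None standing for the star symbol. *)
Section Cubes.
Variables (q n : nat).

Definition point := {ffun 'I_n -> 'I_q}.
Definition starpat := {ffun 'I_n -> option 'I_q}.

Definition cube (v : starpat) : {set point} :=
  [set x : point | [forall i, if v i is Some a then x i == a else true]].

Definition is_subcube (B : {set point}) : bool := [exists v : starpat, cube v == B].

(* the star pattern of a subcube B (unique since cube is injective) *)
Definition star_pattern (B : {set point}) : starpat :=
  odflt [ffun=> None] [pick v : starpat | cube v == B].

(* row of the star matrix, with columns permuted by s: column j is old column s j;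
   entries as option nat (None = star) *)
Definition perm_row (s : 'S_n) (v : starpat) : seq (option nat) :=
  [seq omap (@nat_of_ord q) (v (s j)) | j <- enum 'I_n].

End Cubes.

Fixpoint Mfrac (q m : nat) : seq (seq (option nat)) :=
  match m with
  | 0 => [:: [::]]
  | m'.+1 =>
      let Mp := Mfrac q m' in
      let w := size (head [::] Mp) in
      flatten [seq [seq Some a :: flatten [seq (if b == a then r else nseq w None)
                                           | b <- iota 0 q]
                   | r <- Mp]
              | a <- iota 0 q]
  end.

(* The star matrix of the partition P (rows = star patterns of its subcubes, in
   any order) is a fractal matrix with parameters q, m: some column permutation
   and some row permutation of it equal M_{q,m}. *)
Definition fractal_partition (q m n : nat) (P : {set {set point q n}}) : bool :=
  [exists s : 'S_n,
     perm_eq [seq perm_row s (star_pattern B) | B <- enum P] (Mfrac q m)].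

(* Main.v *)
Require Import Defs.
From mathcomp Require Import all_boot all_fingroup.
From mathcomp Require Import zify.
Set Implicit Arguments. Unset Strict Implicit. Unset Printing Implicit Defensive.

Section Seqs.
Variable T : Type.

Lemma size_flat (F : nat -> seq T) w k l :
  (forall b, size (F b) = w) -> size (flatten [seq F b | b <- iota k l]) = l * w.
Proof.
move=> HF; elim: l k => [|l IH] k //=.
by rewrite size_cat IH HF mulSn.
Qed.

Lemma nth_flat (d : T) (F : nat -> seq T) w k l i c :
  (forall b, size (F b) = w) -> i < l -> c < w ->
  nth d (flatten [seq F b | b <- iota k l]) (i * w + c) = nth d (F (k + i)) c.
Proof.
move=> HF; elim: l k i => [|l IH] k i //= Hi Hc.
rewrite nth_cat HF.
case: i Hi => [|i] Hi.
  by rewrite mul0n add0n Hc addn0.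
have -> : (i.+1 * w + c < w) = false by rewrite mulSn; lia.
have -> : i.+1 * w + c - w = i * w + c by rewrite mulSn; lia.
by rewrite IH // addSnnS.
Qed.

Lemma all2_cat (U : Type) (f : T -> U -> bool) s1 s2 t1 t2 : size s1 = size t1 ->
  all2 f (s1 ++ s2) (t1 ++ t2) = all2 f s1 t1 && all2 f s2 t2.
Proof.
elim: s1 t1 => [|x s1 IH] [|y t1] //= [] /IH ->; by rewrite andbA.
Qed.

End Seqs.

Definition mt (o : option nat) (v : nat) := if o is Some a then v == a else true.

Lemma all2_nth (s : seq (option nat)) (t : seq nat) : size s = size t ->
  all2 mt s t = all (fun i => mt (nth None s i) (nth 0 t i)) (iota 0 (size s)).
Proof.
elim: s t => [|x s IH] [|y t] //= [] /IH ->.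
by rewrite -add1n iotaDl all_map.
Qed.

Lemma all2_none (s : seq (option nat)) (t : seq nat) : all (pred1 None) s ->
  all2 mt s t = (size s == size t).
Proof.
elim: s t => [|x s IH] [|y t] //= /andP[/eqP -> H].
by rewrite IH.
Qed.

Lemma all_none_flat w a (r : seq (option nat)) k l : a < k ->
  all (pred1 None) (flatten [seq (if b == a then r else nseq w None) | b <- iota k l]).
Proof.
elim: l k => [|l IH] k Hk //=.
rewrite all_cat IH ?andbT; last lia.
have -> : (k == a) = false by lia.
by rewrite all_nseq orbT.
Qed.

Lemma all2_blk w a r (xs : seq nat) k l : k <= a < k + l -> size r = w -> size xs = l * w ->
  all2 mt (flatten [seq (if b == a then r else nseq w None) | b <- iota k l]) xs
  = all2 mt r (take w (drop ((a - k) * w) xs)).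
Proof.
move=> Ha Hr; elim: l k xs Ha => [|l IH] k xs Ha Hxs; first lia.
rewrite /= -{1}(cat_take_drop w xs). rewrite all2_cat; last first.
  by case: eqP => _; rewrite ?size_nseq ?size_take Hxs mulSn; case: ltnP; lia.
case: (eqVneq k a) => [<-|Hka].
  rewrite subnn mul0n drop0 (all2_none _ (all_none_flat w r l (ltnSn k))).
  rewrite size_drop (size_flat (w:=w)) ?Hxs.
    by rewrite mulSn addKn eqxx andbT.
  by move=> b; case: eqP => // _; rewrite size_nseq.
rewrite all2_none ?all_nseq ?eqxx ?orbT // size_nseq size_take Hxs mulSn.
have -> : (w < w + l * w) = (0 < l * w) by lia.
rewrite IH; [|lia|by rewrite size_drop Hxs mulSn addKn].
rewrite drop_drop.
have -> : (a - k.+1) * w + w = (a - k) * w by rewrite addnC -mulSn; congr (_ * _); lia.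
case: ltnP => [_|H0]; first by rewrite eqxx.
have -> : l * w = 0 by lia.
by rewrite addn0 eqxx.
Qed.

Section Frac.
Variable q : nat.
Hypothesis q2 : 1 < q.

Fixpoint N m := if m is m'.+1 then (q * N m').+1 else 0.

Definition blk w a (r : seq (option nat)) : seq (option nat) :=
  Some a :: flatten [seq (if b == a then r else nseq w None) | b <- iota 0 q].

Lemma MfracS m : (forall r, r \in Mfrac q m -> size r = N m) -> Mfrac q m <> [::] ->
  Mfrac q m.+1 = flatten [seq [seq blk (N m) a r | r <- Mfrac q m] | a <- iota 0 q].
Proof.
move=> Hs Hne /=.
have -> : size (head [::] (Mfrac q m)) = N m.
  by apply: Hs; case: (Mfrac q m) Hne => //= r s _; rewrite mem_head.
by [].
Qed.

Lemma memS m r : Mfrac q m.+1 = flatten [seq [seq blk (N m) a r | r <- Mfrac q m] | a <- iota 0 q] ->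
  (r \in Mfrac q m.+1) <-> exists a r', [/\ a < q, r' \in Mfrac q m & r = blk (N m) a r'].
Proof.
move=> ->; split.
  case/flattenP => s /mapP [a]; rewrite mem_iota add0n => /andP[_ Ha] -> /mapP [r' Hr' ->].
  by exists a, r'.
case=> a [r' [Ha Hr' ->]]; apply/flattenP.
exists [seq blk (N m) a r0 | r0 <- Mfrac q m]; last by apply: map_f.
by apply/mapP; exists a; rewrite // mem_iota add0n.
Qed.

Lemma size_blk w a r : size r = w -> size (blk w a r) = (q * w).+1.
Proof.
move=> Hr; rewrite /= (size_flat (w := w)) 1?mulnC //.
by move=> b; case: eqP; rewrite ?size_nseq.
Qed.

Lemma rows_basic m : [/\ Mfrac q m <> [::],
  (forall r, r \in Mfrac q m -> size r = N m) &
  Mfrac q m.+1 = flatten [seq [seq blk (N m) a r | r <- Mfrac q m] | a <- iota 0 q]].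
Proof.
elim: m => [|m [Hne Hs HS]].
  by split => // r; rewrite inE => /eqP ->.
have Hs' : forall r, r \in Mfrac q m.+1 -> size r = N m.+1.
  move=> r /(memS r HS) [a [r' [Ha Hr' ->]]].
  by rewrite (size_blk _ (Hs _ Hr')).
have Hne' : Mfrac q m.+1 <> [::].
  have [r0 Hr0] : exists r0, r0 \in Mfrac q m.
    by case: (Mfrac q m) Hne => // r0 s _; exists r0; rewrite mem_head.
  have : blk (N m) 0 r0 \in Mfrac q m.+1.
    by apply/(memS _ HS); exists 0, r0; split => //; lia.
  by case: (Mfrac q m.+1).
by split => //; apply: MfracS.
Qed.

Lemma memR m r : (r \in Mfrac q m.+1) <-> exists a r', [/\ a < q, r' \in Mfrac q m & r = blk (N m) a r'].
Proof. by case: (rows_basic m) => _ _ H; apply: memS H. Qed.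

Lemma sizeR m r : r \in Mfrac q m -> size r = N m.
Proof. by case: (rows_basic m) => _ H _; apply: H. Qed.

Lemma exR m : exists r, r \in Mfrac q m.
Proof. by case: (rows_basic m) => H _ _; case: (Mfrac q m) H => // r s _; exists r; rewrite mem_head. Qed.

Definition okq (o : option nat) := if o is Some a then a < q else true.

Lemma goodR m r : r \in Mfrac q m -> all okq r.
Proof.
elim: m r => [|m IH] r; first by rewrite inE => /eqP ->.
case/memR => a [r' [Ha Hr' ->]] /=; rewrite Ha /=.
elim: (q) (0) => [|l IHl] k //=; rewrite all_cat IHl andbT.
by case: eqP => _; [apply: IH | rewrite all_nseq orbT].
Qed.

Lemma nth_blk w a r b c : size r = w -> b < q -> c < w ->
  nth None (blk w a r) (b * w + c).+1 = if b == a then nth None r c else None.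
Proof.
move=> Hr Hb Hc /=.
rewrite (nth_flat _ (F := fun b => if b == a then r else nseq w None) (w := w)) //.
  by rewrite add0n; case: eqP => // _; rewrite nth_nseq if_same.
by move=> b'; case: eqP; rewrite ?size_nseq.
Qed.

Lemma decomp w k : 0 < k -> k < (q * w).+1 -> exists b c, [/\ b < q, c < w & k = (b * w + c).+1].
Proof.
move=> H0 H1.
have wp : 0 < w by case: w H1 => //; rewrite muln0; lia.
exists ((k.-1) %/ w), ((k.-1) %% w); split.
- by rewrite ltn_divLR //; lia.
- by rewrite ltn_pmod.
- by rewrite -divn_eq; lia.
Qed.

Lemma cover_rows m x : size x = N m -> all (fun v => v < q) x ->
  count (fun r => all2 mt r x) (Mfrac q m) = 1.
Proof.
elim: m x => [|m IH] x.
  by case: x.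
case: x => [|x0 xs] // Hs /andP[Hx0 Hxs].
have {}Hs : size xs = q * N m by case: Hs.
case: (rows_basic m) => _ HsR ->.
rewrite count_flatten -map_comp.
have {}Hxs : all (fun v => v < q) xs := Hxs.
rewrite (_ : map _ (iota 0 q) = [seq (a == x0 : nat) | a <- iota 0 q]).
  by rewrite sumn_count count_uniq_mem ?iota_uniq // mem_iota add0n Hx0.
apply/eq_in_map => a; rewrite mem_iota add0n => /andP[_ Ha] /=.
rewrite count_map.
rewrite (eq_in_count (a2 := fun r' => (x0 == a) && all2 mt r' (take (N m) (drop (a * N m) xs)))); last first.
  move=> r' Hr' /=; rewrite (all2_blk _ _ (k := 0) (l := q)) ?subn0 ?HsR //.
case: (eqVneq x0 a) => [<-|ne].
  2: by rewrite (eq_count (a2 := pred0)) ?count_pred0.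
rewrite /= IH //.
  rewrite size_take size_drop Hs.
  have -> : q * N m - x0 * N m = (q - x0) * N m by rewrite mulnBl.
  case: ltnP => // H; apply/eqP; rewrite eqn_leq H /=.
  by rewrite -{1}(mul1n (N m)) leq_mul2r subn_gt0 Hx0 orbT.
by apply/allP => v /mem_take /mem_drop /(allP Hxs).
Qed.


Lemma nonstar m c : c < N m -> exists r, r \in Mfrac q m /\ nth None r c != None.
Proof.
elim: m c => [|m IH] c //= Hc.
have [r0 Hr0] := exR m.
case: c Hc => [|c] Hc.
  by exists (blk (N m) 0 r0); split => //; apply/memR; exists 0, r0; split => //; lia.
have [b [c' [Hb Hc' ->]]] : exists b c', [/\ b < q, c' < N m & c.+1 = (b * N m + c').+1].
  by apply: decomp.
have [r' [Hr' Hn]] := IH _ Hc'.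
exists (blk (N m) b r'); split.
  by apply/memR; exists b, r'.
by rewrite nth_blk ?eqxx // (sizeR Hr').
Qed.

Definition other b := if b == 0 then 1 else 0.
Lemma other_lt b : other b < q.
Proof. rewrite /other; case: eqP; lia. Qed.
Lemma other_neq b : (other b == b) = false.
Proof. by case: b => [|[|b]]. Qed.

Lemma rigid m (sg : nat -> nat) : (forall j, j < N m -> sg j < N m) ->
  (forall r, r \in Mfrac q m -> [seq nth None r (sg j) | j <- iota 0 (N m)] \in Mfrac q m) ->
  forall j, j < N m -> sg j = j.
Proof.
elim: m sg => [|m IH] sg Hlt Hrow j //=.
set w := N m.
have [r0 Hr0] := exR m.
have nthrs : forall (r : seq (option nat)) (j1 : nat), j1 < N m.+1 ->
    nth None [seq nth None r (sg j) | j <- iota 0 (N m.+1)] j1 = nth None r (sg j1).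
  by move=> r j1 Hj1; rewrite (nth_map 0) ?size_iota // nth_iota.
have img : forall a r', a < q -> r' \in Mfrac q m ->
    exists a'' r'', [/\ a'' < q, r'' \in Mfrac q m &
      [seq nth None (blk w a r') (sg j) | j <- iota 0 (N m.+1)] = blk w a'' r''].
  move=> a r' Ha Hr'; apply/memR; apply: Hrow; apply/memR; by exists a, r'.
have s0 : sg 0 = 0.
  case: (posnP (sg 0)) => // Hp.
  have [b [c [Hb Hc Hk]]] := decomp Hp (Hlt 0 isT).
  have [a'' [r'' [_ _ E]]] := img (other b) r0 (other_lt b) Hr0.
  have := nthrs (blk w (other b) r0) 0 isT.
  by rewrite E Hk nth_blk ?(sizeR Hr0) // eq_sym other_neq.
have blk0 : forall a r' a'' r'', [seq nth None (blk w a r') (sg j) | j <- iota 0 (N m.+1)] = blk w a'' r'' -> a'' = a.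
  move=> a r' a'' r'' E.
  have := nthrs (blk w a r') 0 isT.
  by rewrite E s0 /= => -[].
have stripe : forall b c, b < q -> c < w -> exists c', c' < w /\ sg (b * w + c).+1 = (b * w + c').+1.
  move=> b c Hb Hc.
  have Hj : (b * w + c).+1 < N m.+1.
    rewrite /= ltnS; apply: (@leq_trans (b * w + w)); first by rewrite ltn_add2l.
    by rewrite addnC -mulSn leq_mul2r Hb orbT.
  have bad : forall a r', a < q -> r' \in Mfrac q m -> a != b ->
      nth None (blk w a r') (sg (b * w + c).+1) != None -> False.
    move=> a r' Ha Hr' Hab Hn.
    have [a'' [r'' [_ Hr'' E]]] := img a r' Ha Hr'.
    have := nthrs (blk w a r') _ Hj.
    rewrite E (blk0 _ _ _ _ E) nth_blk ?(sizeR Hr'') // eq_sym (negbTE Hab) => H.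
    by move: Hn; rewrite -H.
  case: (posnP (sg (b * w + c).+1)) => Hp.
    exfalso; apply: (bad (other b) r0 (other_lt b) Hr0); first by rewrite other_neq.
    by rewrite Hp.
  have [b' [c' [Hb' Hc' Hk]]] := decomp Hp (Hlt _ Hj).
  case: (eqVneq b' b) => [Eb|Nb].
    by exists c'; rewrite Hk Eb.
  exfalso.
  have [r' [Hr' Hn]] := nonstar Hc'.
  apply: (bad b' r' Hb' Hr' Nb).
  by rewrite Hk nth_blk ?eqxx ?(sizeR Hr').
have fix_stripe : forall b c, b < q -> c < w -> sg (b * w + c).+1 = (b * w + c).+1.
  move=> b c Hb Hc.
  pose tau c := (sg (b * w + c).+1).-1 - b * w.
  have Htau : forall c, c < w -> tau c < w /\ sg (b * w + c).+1 = (b * w + tau c).+1.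
    move=> c1 Hc1; have [c' [Hc' E]] := stripe b c1 Hb Hc1.
    by rewrite /tau E /= addKn.
  have Ht : tau c = c.
    apply: (IH tau) => //.
      by move=> c1 /Htau [].
    move=> r' Hr'.
    have [a'' [r'' [_ Hr'' E]]] := img b r' Hb Hr'.
    move: (blk0 _ _ _ _ E) => Ea; subst a''.
    suff -> : [seq nth None r' (tau j) | j <- iota 0 (N m)] = r'' by [].
    apply: (@eq_from_nth _ None); first by rewrite size_map size_iota (sizeR Hr'').
    move=> c1; rewrite size_map size_iota => Hc1.
    rewrite (nth_map 0) ?size_iota // nth_iota // add0n.
    have Hj1 : (b * w + c1).+1 < N m.+1.
      rewrite /= ltnS; apply: (@leq_trans (b * w + w)); first by rewrite ltn_add2l.
      by rewrite addnC -mulSn leq_mul2r Hb orbT.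
    have := nthrs (blk w b r') _ Hj1.
    rewrite E nth_blk ?eqxx ?(sizeR Hr'') // => ->.
    case: (Htau c1 Hc1) => Ht ->.
    by rewrite nth_blk ?eqxx ?(sizeR Hr').
  by case: (Htau c Hc) => _ ->; rewrite Ht.
move=> Hj; case: (posnP j) => [-> | Hp] //.
have [b [c [Hb Hc ->]]] := decomp Hp Hj.
by rewrite fix_stripe.
Qed.

Definition fillseq (r : seq (option nat)) := [seq (if o is Some a then a else 0) | o <- r].

Lemma match_fill r : all2 mt r (fillseq r).
Proof. by elim: r => [|[a|] r IH] //=; rewrite IH ?eqxx. Qed.

Lemma fill_ok r : all okq r -> all (fun v => v < q) (fillseq r).
Proof. elim: r => [|[a|] r IH] //=; [case/andP => H1 H2; by rewrite H1 (IH H2) | move=> H; rewrite (IH H) andbT; lia]. Qed.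

Lemma uniq_match m x r1 r2 : size x = N m -> all (fun v => v < q) x ->
  r1 \in Mfrac q m -> r2 \in Mfrac q m -> all2 mt r1 x -> all2 mt r2 x -> r1 = r2.
Proof.
move=> Hs Ha H1 H2 M1 M2; apply/eqP/negP => /negP ne.
have := cover_rows Hs Ha.
have c1 : 0 < count (pred1 r1) (Mfrac q m) by rewrite -has_count has_pred1.
have c2 : 0 < count (pred1 r2) (Mfrac q m) by rewrite -has_count has_pred1.
have c0 : count (predI (pred1 r1) (pred1 r2)) (Mfrac q m) = 0.
  rewrite (eq_count (a2 := pred0)) ?count_pred0 // => r /=.
  by apply/andP => -[/eqP -> /eqP E]; rewrite E eqxx in ne.
have := count_predUI (pred1 r1) (pred1 r2) (Mfrac q m).
have : count (predU (pred1 r1) (pred1 r2)) (Mfrac q m) <= count (fun r => all2 mt r x) (Mfrac q m).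
  by apply: sub_count => r /= /orP[] /eqP ->.
lia.
Qed.

Lemma uniqR m : uniq (Mfrac q m).
Proof.
apply: count_mem_uniq => x.
case: (boolP (x \in Mfrac q m)) => Hx; last by apply/count_memPn.
have c1 : 0 < count (pred1 x) (Mfrac q m) by rewrite -has_count has_pred1.
have := cover_rows (x := fillseq x) (m := m).
rewrite size_map (sizeR Hx) fill_ok ?(goodR Hx) // => /(_ erefl isT) H.
have : count (pred1 x) (Mfrac q m) <= count (fun r => all2 mt r (fillseq x)) (Mfrac q m).
  by apply: sub_count => r /= /eqP ->; apply: match_fill.
rewrite H => H2; apply/eqP; by rewrite eqn_leq H2 c1.
Qed.

End Frac.

Section Pts.
Variables q n : nat.
Hypothesis q2 : 1 < q.

Definition toI (o : option nat) : option 'I_q := if o is Some a then insub a else None.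
Definition unperm (s : 'S_n) (r : seq (option nat)) : starpat q n :=
  [ffun i => toI (nth None r ((s^-1)%g i))].
Definition ptseq (s : 'S_n) (x : point q n) : seq nat := [seq val (x (s j)) | j <- enum 'I_n].

Lemma fill_in (v : starpat q n) (c : 'I_q) :
  [ffun i => if v i is Some a then a else c] \in cube v.
Proof. by rewrite inE; apply/forallP => i; rewrite ffunE; case: (v i). Qed.

Lemma cube_sub (v v' : starpat q n) i b : cube v \subset cube v' -> v' i = Some b -> v i = Some b.
Proof.
move=> Hsub Hv'.
pose c : 'I_q := if val b == 0 then Ordinal q2 else Ordinal (ltnW q2).
have cb : c != b.
  apply/negP => /eqP E; move: (congr1 val E); rewrite /c.
  by case: eqP => /= H; lia.
have := subsetP Hsub _ (fill_in v c); rewrite inE => /forallP /(_ i).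
rewrite Hv' ffunE; case E: (v i) => [a|] /eqP; first by move=> ->.
by move=> H; rewrite H eqxx in cb.
Qed.

Lemma cube_inj : injective (@cube q n).
Proof.
move=> v v' E; apply/ffunP => i.
case E': (v' i) => [b|]; first by apply: (cube_sub (v' := v')) E'; rewrite E.
case E2: (v i) => [a|] //.
have := cube_sub (v := v') (v' := v) (i := i) (b := a); rewrite E subxx E2 E' => H.
by have := H isT erefl.
Qed.

Lemma star_pattern_cube (v : starpat q n) : star_pattern (cube v) = v.
Proof.
rewrite /star_pattern; case: pickP => [v' /eqP H | H] /=; first exact: cube_inj.
by have := H v; rewrite eqxx.
Qed.

Lemma subcube_eq (B : {set point q n}) : is_subcube B -> cube (star_pattern B) = B.
Proof. by case/existsP => v /eqP <-; rewrite star_pattern_cube. Qed.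

Lemma nth_perm_row s (v : starpat q n) (j : 'I_n) :
  nth None (perm_row s v) j = omap (@nat_of_ord q) (v (s j)).
Proof. by rewrite /perm_row (nth_map j) ?size_enum_ord // nth_ord_enum. Qed.

Lemma unperm_perm s (v : starpat q n) : unperm s (perm_row s v) = v.
Proof.
apply/ffunP => i; rewrite ffunE nth_perm_row permKV.
by case: (v i) => [a|] //=; rewrite valK.
Qed.

Lemma toI_val (o : option nat) : okq q o -> omap (@nat_of_ord q) (toI o) = o.
Proof. by case: o => [a|] //= Ha; rewrite insubT. Qed.

Lemma perm_unperm s r : size r = n -> all (okq q) r -> perm_row s (unperm s r) = r.
Proof.
move=> Hs Hok.
apply: (@eq_from_nth _ None); first by rewrite size_map size_enum_ord.
rewrite size_map size_enum_ord => j Hj.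
rewrite (nth_perm_row s _ (Ordinal Hj)) ffunE permK /= toI_val //.
by apply: (allP Hok); apply: mem_nth; rewrite Hs.
Qed.

Lemma size_ptseq s x : size (ptseq s x) = n.
Proof. by rewrite size_map size_enum_ord. Qed.

Lemma ptseq_ok s x : all (fun v => v < q) (ptseq s x).
Proof. apply/allP => v; rewrite /ptseq => /mapP [j _ ->]; exact: ltn_ord. Qed.

Lemma mem_cube s r x : size r = n -> all (okq q) r ->
  (x \in cube (unperm s r)) = all2 mt r (ptseq s x).
Proof.
move=> Hs Hok; rewrite all2_nth ?size_ptseq // inE Hs.
apply/forallP/allP => [H j | H i].
  rewrite mem_iota add0n => Hj.
  have := H (s (Ordinal Hj)); rewrite ffunE permK /=.
  have -> : nth 0 (ptseq s x) j = val (x (s (Ordinal Hj))).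
    by rewrite /ptseq (nth_map (Ordinal Hj)) ?size_enum_ord //; congr (val (x (s _))); apply: (nth_ord_enum (Ordinal Hj) (Ordinal Hj)).
  have : okq q (nth None r j) by apply: (allP Hok); apply: mem_nth; rewrite Hs.
  by case: (nth None r j) => [a|] //= Ha; rewrite insubT.
have := H ((s^-1)%g i); rewrite mem_iota add0n ltn_ord => /(_ isT).
rewrite ffunE /ptseq (nth_map ((s^-1)%g i)) ?size_enum_ord // nth_ord_enum permKV.
have : okq q (nth None r ((s^-1)%g i)) by apply: (allP Hok); apply: mem_nth; rewrite Hs.
case: (nth None r _) => [a|] //= Ha; rewrite insubT /=.
by move=> /eqP E; apply/eqP/val_inj.
Qed.

End Pts.

Lemma Nq q m : 1 < q -> (q ^ m - 1) %/ (q - 1) = N q m.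
Proof.
move=> q2.
have H : q ^ m - 1 = (q - 1) * N q m.
  elim: m => [|m IH]; first by rewrite muln0.
  rewrite /=.
  have := expn_gt0 q m; rewrite expnS; nia.
by rewrite H mulKn //; lia.
Qed.

Theorem mainTheorem8 (q m n : nat) :
  2 <= q -> 1 <= m -> n = (q ^ m - 1) %/ (q - 1) ->
  #|[set P : {set {set point q n}} |
       [&& partition P [set: point q n],
           [forall B in P, is_subcube B] &
           fractal_partition m P]]| = n`!.
Proof.
move=> q2 m1 En; rewrite Nq // in En; subst n.
set n := N q m.
pose R := Mfrac q m.
have Hsz : forall r, r \in R -> size r = n by move=> r; apply: sizeR.
have Hok : forall r, r \in R -> all (okq q) r by move=> r; apply: goodR.
pose F (s : 'S_n) : {set {set point q n}} := [set:: [seq cube (unperm q s r) | r <- R]].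
have memF : forall s B, (B \in F s) = (B \in [seq cube (unperm q s r) | r <- R]).
  by move=> s B; rewrite inE.
have -> : [set P : {set {set point q n}} | [&& partition P [set: point q n],
           [forall B in P, is_subcube B] & fractal_partition m P]] = F @: setT.
  apply/setP => P; rewrite inE; apply/idP/imsetP.
    case/and3P => _ /forallP Hsub /existsP [s Hs]; exists s => //.
    apply/setP => B; rewrite memF; apply/idP/idP.
      move=> HB; have Hc := implyP (Hsub B) HB.
      apply/mapP; exists (perm_row s (star_pattern B)).
        by rewrite /R -(perm_mem Hs); apply: map_f; rewrite mem_enum.
      by rewrite unperm_perm subcube_eq.
    case/mapP => r Hr ->.
    move: Hr; rewrite /R -(perm_mem Hs) => /mapP [B' HB' ->].
    rewrite mem_enum in HB'.
    by rewrite unperm_perm subcube_eq //; apply: (implyP (Hsub B')).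
  case=> s _ ->.
  apply/and3P; split.
  - apply/and3P; split.
    + apply/eqP/setP => x; rewrite inE; apply/bigcupP.
      have := cover_rows q2 (size_ptseq s x) (ptseq_ok s x).
      move=> Hc; have : has (fun r => all2 mt r (ptseq s x)) R by rewrite has_count Hc.
      move=> /hasP [r Hr Hm].
      exists (cube (unperm q s r)); first by rewrite memF; apply: map_f.
      by rewrite mem_cube ?Hsz ?Hok.
    + apply/trivIsetP => A B; rewrite !memF => /mapP [r1 H1 ->] /mapP [r2 H2 ->] ne.
      rewrite disjoint_subset; apply/subsetP => x X1; rewrite inE; apply/negP => X2.
      rewrite mem_cube ?Hsz ?Hok // in X1; rewrite mem_cube ?Hsz ?Hok // in X2.
      have E := uniq_match q2 (size_ptseq s x) (ptseq_ok s x) H1 H2 X1 X2.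
      by rewrite E eqxx in ne.
    + apply/negP; rewrite memF => /mapP [r Hr E].
      have := fill_in (unperm q s r) (Ordinal (ltnW q2)).
      by rewrite -E inE.
  - apply/forallP => B; apply/implyP; rewrite memF => /mapP [r _ ->].
    by apply/existsP; exists (unperm q s r).
  - apply/existsP; exists s.
    have Hu : uniq [seq cube (unperm q s r) | r <- R].
      rewrite map_inj_in_uniq; first exact: uniqR.
      move=> r1 r2 H1 H2 /(cube_inj q2) E.
      by rewrite -(perm_unperm s (Hsz _ H1) (Hok _ H1)) E perm_unperm ?Hsz ?Hok.
    have Pe : perm_eq (enum (F s)) [seq cube (unperm q s r) | r <- R].
      by apply: uniq_perm; [apply: enum_uniq | exact: Hu | move=> B; rewrite mem_enum memF].
    apply: perm_trans (perm_map _ Pe) _.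
    rewrite -map_comp.
    rewrite (eq_in_map _ id R).1 ?map_id //.
    move=> r Hr /=.
    by rewrite star_pattern_cube ?perm_unperm ?Hsz ?Hok.
rewrite card_imset ?cardsT ?card_Sn //.
move=> s t E.
pose sg (j : nat) := if insub j is Some i then val ((t^-1)%g (s i)) else j.
have sgE : forall i : 'I_n, sg i = val ((t^-1)%g (s i)) by move=> i; rewrite /sg valK.
have Hsg : forall j, j < n -> sg j < n.
  move=> j Hj; have E1 := sgE (Ordinal Hj); rewrite /= in E1; rewrite E1; exact: ltn_ord.
have Hrow : forall r, r \in R -> [seq nth None r (sg j) | j <- iota 0 n] \in R.
  move=> r Hr.
  have : cube (unperm q t r) \in F s by rewrite E memF; apply: map_f.
  rewrite memF => /mapP [r' Hr' Ec].
  have Eu := cube_inj q2 Ec.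
  suff -> : [seq nth None r (sg j) | j <- iota 0 n] = r' by [].
  rewrite -(perm_unperm s (Hsz _ Hr') (Hok _ Hr')) -Eu.
  apply: (@eq_from_nth _ None); first by rewrite size_map size_iota size_map size_enum_ord.
  move=> j; rewrite size_map size_iota => Hj.
  rewrite (nth_map 0) ?size_iota // nth_iota // add0n.
  have E1 := sgE (Ordinal Hj); rewrite /= in E1; rewrite E1.
  rewrite (nth_perm_row s _ (Ordinal Hj)) ffunE toI_val //.
  by apply: (allP (Hok r Hr)); apply: mem_nth; rewrite Hsz.
apply/permP => i.
have := @rigid q q2 m sg Hsg Hrow i (ltn_ord i).
rewrite sgE => /val_inj H.
by rewrite -{2}H permKV.
Qed.
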